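(* Let $\mathcal{H}\in\mathbb{R}_D^{[n_1,\ldots,n_m]}$. Then $\mathcal{H}$ is $\mathbb{R}$-psd if and only if $\mathcal{H}$ is $\mathbb{C}$-psd.
   Context: For vectors $v_i$, $[v_1,\ldots,v_m]_{\otimes h}:=v_1\otimes\cdots\otimes v_m\otimes\overline{v_1}\otimes\cdots\otimes\overline{v_m}$. $\mathbb{R}_D^{[n_1,\ldots,n_m]}$ is the set of real tensors of the form $\sum_i\lambda_i[u_i^1,\ldots,u_i^m]_{\otimes h}$ with $\lambda_i\in\mathbb{R}$ and $u_i^j\in\mathbb{R}^{n_j}$. For a Hermitian tensor $\mathcal{H}$ (i.e. $\mathcal{H}_{i_1\ldots i_m j_1\ldots j_m}=\overline{\mathcal{H}_{j_1\ldots j_m i_1\ldots i_m}}$) and $x=(x_1,\ldots,x_m)$, $\mathcal{H}(x,\overline{x}):=\langle\mathcal{H},[x_1,\ldots,x_m]_{\otimes h}\rangle$ with $\langle\mathcal{A},\mathcal{B}\rangle=\sum\mathcal{A}_{\cdot}\overline{\mathcal{B}_{\cdot}}$. $\mathcal{H}$ is $\mathbb{R}$-psd if $\mathcal{H}(x,\overline{x})\ge0$ for all real $x_i\in\mathbb{R}^{n_i}$, and $\mathbb{C}$-psd if $\mathcal{H}(x,\overline{x})\ge0$ for all complex $x_i\in\mathbb{C}^{n_i}$. *)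

(* Defs.v *)
From HB Require Import structures.
From mathcomp Require Import all_boot all_order all_algebra.
From mathcomp Require Import complex.
Set Implicit Arguments. Unset Strict Implicit. Unset Printing Implicit Defensive.
Import Order.TTheory GRing.Theory Num.Theory.
Local Open Scope ring_scope.

(* A Hermitian-shaped tensor of order 2m with dimensions
   [n_1,...,n_m,n_1,...,n_m] is a function H : idx n -> idx n -> R[i],
   H i j = H_{i_1..i_m j_1..j_m}. *)

Definition idx (m : nat) (n : 'I_m -> nat) := {dffun forall k : 'I_m, 'I_(n k)}.

Definition ctensor (R : rcfType) (m : nat) (n : 'I_m -> nat) :=
  idx n -> idx n -> R[i].

Definition cvecs (R : rcfType) (m : nat) (n : 'I_m -> nat) :=
  forall k : 'I_m, 'I_(n k) -> R[i].
Definition rvecs (R : rcfType) (m : nat) (n : 'I_m -> nat) :=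
  forall k : 'I_m, 'I_(n k) -> R.

Definition cvec_of (R : rcfType) m (n : 'I_m -> nat) (u : rvecs R n) : cvecs R n :=
  fun k i => (u k i)%:C%C.

Definition htens (R : rcfType) m (n : 'I_m -> nat) (x : cvecs R n) : ctensor R n :=
  fun i j => (\prod_(k < m) x k (i k)) * (\prod_(k < m) conjc (x k (j k))).

Definition tinner (R : rcfType) m (n : 'I_m -> nat) (A B : ctensor R n) : R[i] :=
  \sum_(i : idx n) \sum_(j : idx n) A i j * conjc (B i j).

Definition heval (R : rcfType) m (n : 'I_m -> nat) (H : ctensor R n) (x : cvecs R n) :=
  tinner H (htens x).

Definition hermitian (R : rcfType) m (n : 'I_m -> nat) (H : ctensor R n) :=
  forall i j, H i j = conjc (H j i).

Definition in_RD (R : rcfType) m (n : 'I_m -> nat) (H : ctensor R n) :=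
  exists s : seq (R * rvecs R n),
    forall i j, H i j = \sum_(p <- s) (p.1)%:C%C * htens (cvec_of p.2) i j.

Definition R_psd (R : rcfType) m (n : 'I_m -> nat) (H : ctensor R n) :=
  forall u : rvecs R n, 0 <= heval H (cvec_of u).

Definition C_psd (R : rcfType) m (n : 'I_m -> nat) (H : ctensor R n) :=
  forall x : cvecs R n, 0 <= heval H x.

(* Main.v *)
Require Import Defs.
From HB Require Import structures.
From mathcomp Require Import all_boot all_order all_algebra.
From mathcomp Require Import complex ring.
Set Implicit Arguments. Unset Strict Implicit. Unset Printing Implicit Defensive.
Import Order.TTheory GRing.Theory Num.Theory.
Local Open Scope ring_scope.

Lemma sum_dffun_prod (R : comNzRingType) (m : nat) (n : 'I_m -> nat)
  (F : forall k : 'I_m, 'I_(n k) -> R) :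
  \sum_(t : idx n) \prod_(k < m) F k (t k) = \prod_(k < m) \sum_(j < n k) F k (j).
Proof.
pose T_ : 'I_m -> finType := fun k => 'I_(n k).
rewrite (reindex (@dffun_of_fprod _ T_)) /=; last exact/onW_bij/dffun_of_fprod_bij.
transitivity (\sum_(f : fprod T_) \prod_(k in 'I_m) ([ffun j => F k j] : {ffun T_ k -> R}) (f k)).
  by apply: eq_bigr => f _; apply: eq_bigr => k _; rewrite !ffunE.
rewrite (@big_fprod _ _ _ _ _ _ T_ (fun k => [ffun j => F k j] : {ffun T_ k -> R})).
pose P : forall k, {ffun T_ k -> R} := fun k => [ffun j => F k j].
symmetry; transitivity (\prod_(k < m) \sum_(j in tagged_with T_ k) untag 0 (P k) j).
  apply: eq_bigr => k _; rewrite -(big_tag P k).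
  by apply: eq_bigr => j _; rewrite ffunE.
rewrite bigA_distr_big_dep; apply: eq_bigl => g //.
Qed.

Section Main.
Variables (R : rcfType) (m : nat) (n : 'I_m -> nat).

Lemma cM (a b : R[i]) : conjc (a * b) = conjc a * conjc b. Proof. by rewrite rmorphM. Qed.
Lemma cD (a b : R[i]) : conjc (a + b) = conjc a + conjc b. Proof. by rewrite rmorphD. Qed.
Lemma cS k (F : 'I_k -> R[i]) : conjc (\sum_(j < k) F j) = \sum_(j < k) conjc (F j).
Proof. by rewrite rmorph_sum. Qed.
Lemma cX (a : R[i]) e : conjc (a ^+ e) = conjc a ^+ e. Proof. by rewrite rmorphXn. Qed.

Definition wv (u : rvecs R n) (x : cvecs R n) (k : 'I_m) : R[i] :=
  \sum_(j < n k) (u k j)%:C%C * x k j.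

Lemma tinner_htens u x :
  tinner (htens (cvec_of u)) (htens x) = \prod_(k < m) (conjc (wv u x k) * wv u x k).
Proof.
rewrite /tinner /htens.
transitivity (\sum_(i : idx n) \sum_(j : idx n)
   ((\prod_(k < m) ((u k (i k))%:C%C * conjc (x k (i k)))) *
    (\prod_(k < m) ((u k (j k))%:C%C * x k (j k))))).
  apply: eq_bigr => i _; apply: eq_bigr => j _.
  have cp : forall (F : 'I_m -> R[i]), conjc (\prod_(k < m) F k) = \prod_(k < m) conjc (F k).
    by move=> F; rewrite rmorph_prod.
  have cm : forall a b : R[i], conjc (a * b) = conjc a * conjc b by move=> *; rewrite rmorphM.
  rewrite /cvec_of cm !cp.
  under [X in _ * X * _]eq_bigr do rewrite conjc_real.
  under [X in _ * (_ * X)]eq_bigr do rewrite conjcK.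
  by rewrite !big_split /= mulrACA.
rewrite -big_distrlr /=.
rewrite (sum_dffun_prod (fun k j => (u k j)%:C%C * conjc (x k j))).
rewrite (sum_dffun_prod (fun k j => (u k j)%:C%C * x k j)).
rewrite -big_split /=; apply: eq_bigr => k _; congr (_ * _).
rewrite /wv cS; apply: eq_bigr => j _; by rewrite cM conjc_real.
Qed.

Lemma heval_RD (H : ctensor R n) (s : seq (R * rvecs R n)) x :
  (forall i j, H i j = \sum_(p <- s) (p.1)%:C%C * htens (cvec_of p.2) i j) ->
  heval H x = \sum_(p <- s) (p.1)%:C%C * tinner (htens (cvec_of p.2)) (htens x).
Proof.
move=> HE; rewrite /heval /tinner.
transitivity (\sum_(i : idx n) \sum_(j : idx n) \sum_(p <- s)
   (p.1)%:C%C * (htens (cvec_of p.2) i j * conjc (htens x i j))).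
  apply: eq_bigr => i _; apply: eq_bigr => j _; rewrite HE big_distrl.
  by apply: eq_bigr => p _; rewrite mulrA.
under eq_bigr do rewrite exchange_big.
rewrite exchange_big; apply: eq_bigr => p _; rewrite mulr_sumr.
by apply: eq_bigr => i _; rewrite mulr_sumr.
Qed.

Lemma wv_real u v k : wv u (cvec_of v) k = (\sum_(j < n k) u k j * v k j)%:C%C.
Proof. by rewrite /wv rmorph_sum; apply: eq_bigr => j _; rewrite rmorphM. Qed.

Lemma normsq (a b : R) :
  conjc ((a%:C)%C + 'i%C * (b%:C)%C) * ((a%:C)%C + 'i%C * (b%:C)%C) = ((a ^+ 2 + b ^+ 2)%:C)%C.
Proof.
have ci : conjc ('i%C : R[i]) = - 'i%C by apply/eqP; rewrite eq_complex /= oppr0 !eqxx.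
rewrite cD cM ci !conjc_real rmorphD !rmorphXn.
transitivity ((a%:C)%C ^+ 2 - ('i%C ^+ 2) * (b%:C)%C ^+ 2 : R[i]); first by ring.
rewrite sqr_i; ring.
Qed.

Definition rpart (x : cvecs R n) : rvecs R n := fun k j => complex.Re (x k j).
Definition ipart (x : cvecs R n) : rvecs R n := fun k j => complex.Im (x k j).
Definition choosev (x : cvecs R n) (f : {ffun 'I_m -> bool}) : rvecs R n :=
  fun k j => if f k then complex.Re (x k j) else complex.Im (x k j).

Arguments rpart x k j : clear implicits.
Arguments ipart x k j : clear implicits.
Arguments choosev x f k j : clear implicits.

Lemma wv_split u x k : wv u x k = wv u (cvec_of (rpart x)) k + 'i%C * wv u (cvec_of (ipart x)) k.
Proof.
rewrite /wv mulr_sumr -big_split; apply: eq_bigr => j _.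
rewrite {1}[x k j]complexE /cvec_of /rpart /ipart.
by rewrite mulrDr mulrCA.
Qed.

Lemma wv_choose u x f k : wv u (cvec_of (choosev x f)) k =
  if f k then wv u (cvec_of (rpart x)) k else wv u (cvec_of (ipart x)) k.
Proof. by rewrite /wv /cvec_of /choosev /rpart /ipart; case: (f k). Qed.

Lemma key (H : ctensor R n) x : in_RD H ->
  heval H x = \sum_(f : {ffun 'I_m -> bool}) heval H (cvec_of (choosev x f)).
Proof.
move=> [s HE].
rewrite (heval_RD x HE).
under [RHS]eq_bigr do rewrite (heval_RD _ HE).
rewrite exchange_big /=; apply: eq_bigr => p _; rewrite -mulr_sumr; congr (_ * _).
rewrite tinner_htens.
under [RHS]eq_bigr do rewrite tinner_htens.
under [RHS]eq_bigr do under eq_bigr do rewrite wv_choose.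
under [LHS]eq_bigr do rewrite wv_split !wv_real normsq.
transitivity (\prod_(k < m) \sum_(bb : bool)
   (if bb then (\sum_(j < n k) (p.2) k j * rpart x k j) ^+ 2
    else (\sum_(j < n k) (p.2) k j * ipart x k j) ^+ 2)%:C%C).
  by apply: eq_bigr => k _; rewrite big_bool /= rmorphD.
rewrite bigA_distr_bigA /=.
apply: eq_bigr => f _; apply: eq_bigr => k _.
by case: (f k); rewrite !wv_real conjc_real -rmorphM expr2.
Qed.
End Main.

Theorem proposition5p3 (R : rcfType) (m : nat) (n : 'I_m -> nat)
    (H : ctensor R n) :
  in_RD H -> (R_psd H <-> C_psd H).
Proof.
move=> hRD; split => [Rpsd x | Cpsd u]; last exact: Cpsd.
rewrite (key x hRD); apply: sumr_ge0 => f _; exact: Rpsd.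
Qed.
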